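(* Let $(X_f,G)$ be a semicocycle extension of a minimal equicontinuous system $(\mathbb{T},G)$ with $\mathbb{T}$ metrizable. Suppose that $D_f$ is countable, that $G\theta\cap D_f$ is finite for every $\theta\in\mathbb{T}$, and that $G$ acts locally almost freely on every $\theta\in D_f$. Then $(X_f,G)$ is tame.
   Context: Semicocycle setting: $G$ topological group acting jointly continuously, minimally (all orbits dense) and equicontinuously on compact Hausdorff $\mathbb{T}$; $E(\mathbb{T})$ Ellis semigroup (closure of $\{\theta\mapsto g\theta\}$ in $\mathbb{T}^{\mathbb{T}}$). $K$ compact Hausdorff; $f\colon G\theta_0\to K$ continuous with $\overline{G\theta_0}=\mathbb{T}$; $F=\overline{\operatorname{gr}f}\subseteq\mathbb{T}\times K$, $F(\theta)=\{k:(\theta,k)\in F\}$, $D_f=\{\theta:\#F(\theta)>1\}$; $\theta_1\sim\theta_2$ iff $F(\xi\theta_1)=F(\xi\theta_2)$ for all $\xi\in E(\mathbb{T})$; $f$ invariant under no rotation ($\sim$ trivial). $X_f\subseteq K^G$ is the closure of $\{\sigma^h f\}$, $f\equiv(f(g\theta_0))_g$, $\sigma^h((x_g)_g)=(x_{gh})_g$. Local almost freeness: $\operatorname{Stab}_G(\theta)=\{g:g\theta=\theta\}$; $g\overset{\theta}{\sim}g'$ iff $g,g'$ coincide on a neighbourhood of $\theta$; $G$ acts locally almost freely on $\theta$ if $\operatorname{Stab}_G(\theta)/\overset{\theta}{\sim}$ is finite. Tameness: for $A_0,A_1\subseteq X_f$, $J\subseteq G$ is an independence set if for all finite $I\subseteq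 J$ and $a\in\{0,1\}^I$, $\bigcap_{i\in I}\sigma^{i^{-1}}A_{a_i}\neq\emptyset$; $(x_0,x_1)$ is an IT-pair if every pair of neighbourhoods of $x_0,x_1$ has an infinite independence set; the system is tame iff every IT-pair has $x_0=x_1$. *)

(* Defs.v *)
From Stdlib Require Import Reals List Classical FunctionalExtensionality.
Import ListNotations.
Open Scope R_scope.

Definition is_topology {T : Type} (op : (T -> Prop) -> Prop) : Prop :=
  op (fun _ => True) /\
  (forall U V, op U -> op V -> op (fun x => U x /\ V x)) /\
  (forall F : (T -> Prop) -> Prop, (forall U, F U -> op U) ->
     op (fun x => exists U, F U /\ U x)).

Definition prod_open {A B : Type} (opA : (A -> Prop) -> Prop) (opB : (B -> Prop) -> Prop)
  (W : A * B -> Prop) : Prop :=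
  forall p, W p -> exists U V, opA U /\ opB V /\ U (fst p) /\ V (snd p) /\
     (forall a b, U a -> V b -> W (a, b)).

(** Product (pointwise convergence) topology on I -> Y, generated by finite cylinders. *)
Definition pi_open {I Y : Type} (opY : (Y -> Prop) -> Prop) (W : (I -> Y) -> Prop) : Prop :=
  forall x, W x -> exists l : list (I * (Y -> Prop)),
     Forall (fun p => opY (snd p) /\ snd p (x (fst p))) l /\
     (forall y, Forall (fun p => snd p (y (fst p))) l -> W y).

Definition closure {T : Type} (op : (T -> Prop) -> Prop) (S : T -> Prop) (x : T) : Prop :=
  forall U, op U -> U x -> exists y, U y /\ S y.

Definition dense {T : Type} (op : (T -> Prop) -> Prop) (S : T -> Prop) : Prop :=
  forall x, closure op S x.

Definition continuous {A B : Type} (opA : (A -> Prop) -> Prop) (opB : (B -> Prop) -> Prop)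
  (f : A -> B) : Prop :=
  forall V, opB V -> opA (fun x => V (f x)).

Definition compact {T : Type} (op : (T -> Prop) -> Prop) : Prop :=
  forall F : (T -> Prop) -> Prop, (forall U, F U -> op U) ->
    (forall x, exists U, F U /\ U x) ->
    exists l : list (T -> Prop), Forall F l /\ (forall x, exists U, In U l /\ U x).

Definition hausdorff {T : Type} (op : (T -> Prop) -> Prop) : Prop :=
  forall x y, x <> y -> exists U V, op U /\ op V /\ U x /\ V y /\
    (forall z, ~ (U z /\ V z)).

Definition metrizable {T : Type} (op : (T -> Prop) -> Prop) : Prop :=
  exists d : T -> T -> R,
    (forall x y, d x y = 0 <-> x = y) /\
    (forall x y, d x y = d y x) /\
    (forall x y z, d x z <= d x y + d y z) /\
    (forall U, op U <-> (forall x, U x -> exists eps, 0 < eps /\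
                             (forall y, d x y < eps -> U y))).

Definition finite_set {T : Type} (P : T -> Prop) : Prop :=
  exists l : list T, forall x, P x -> In x l.

Definition infinite_set {T : Type} (P : T -> Prop) : Prop := ~ finite_set P.

Definition countable_set {T : Type} (P : T -> Prop) : Prop :=
  exists h : T -> nat, forall x y, P x -> P y -> h x = h y -> x = y.

Definition is_group {G : Type} (mul : G -> G -> G) (inv : G -> G) (e : G) : Prop :=
  (forall a b c, mul a (mul b c) = mul (mul a b) c) /\
  (forall a, mul e a = a /\ mul a e = a) /\
  (forall a, mul (inv a) a = e /\ mul a (inv a) = e).

Definition is_topological_group {G : Type} (opG : (G -> Prop) -> Prop)
  (mul : G -> G -> G) (inv : G -> G) (e : G) : Prop :=
  is_topology opG /\ is_group mul inv e /\
  continuous (prod_open opG opG) opG (fun p => mul (fst p) (snd p)) /\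
  continuous opG opG inv.

Definition is_action {G T : Type} (mul : G -> G -> G) (e : G) (act : G -> T -> T) : Prop :=
  (forall th, act e th = th) /\
  (forall g h th, act (mul g h) th = act g (act h th)).

Definition orbit {G T : Type} (act : G -> T -> T) (th : T) (y : T) : Prop :=
  exists g, y = act g th.

Definition minimal_action {G T : Type} (opT : (T -> Prop) -> Prop) (act : G -> T -> T) : Prop :=
  forall th, dense opT (orbit act th).

(** Equicontinuity w.r.t. the unique uniformity of a compact Hausdorff space,
    whose entourages are the neighbourhoods of the diagonal. *)
Definition equicontinuous_action {G T : Type} (opT : (T -> Prop) -> Prop)
  (act : G -> T -> T) : Prop :=
  forall W, prod_open opT opT W -> (forall x, W (x, x)) ->
    exists V, prod_open opT opT V /\ (forall x, V (x, x)) /\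
      (forall g x y, V (x, y) -> W (act g x, act g y)).

(** * Semicocycle data.
    The continuous map f : G th0 -> K is represented as f : G -> K with
    f g = f(g th0), which must be well defined on the orbit. *)

Definition well_defined_on_orbit {G T K : Type} (act : G -> T -> T) (th0 : T) (f : G -> K) : Prop :=
  forall g h, act g th0 = act h th0 -> f g = f h.

Definition continuous_on_orbit {G T K : Type} (opT : (T -> Prop) -> Prop)
  (opK : (K -> Prop) -> Prop) (act : G -> T -> T) (th0 : T) (f : G -> K) : Prop :=
  forall V, opK V -> exists U, opT U /\ (forall h, V (f h) <-> U (act h th0)).

Definition Fgraph {G T K : Type} (opT : (T -> Prop) -> Prop) (opK : (K -> Prop) -> Prop)
  (act : G -> T -> T) (th0 : T) (f : G -> K) (th : T) (k : K) : Prop :=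
  closure (prod_open opT opK) (fun p => exists g, p = (act g th0, f g)) (th, k).

Definition Dset {G T K : Type} (opT : (T -> Prop) -> Prop) (opK : (K -> Prop) -> Prop)
  (act : G -> T -> T) (th0 : T) (f : G -> K) (th : T) : Prop :=
  exists k1 k2, Fgraph opT opK act th0 f th k1 /\ Fgraph opT opK act th0 f th k2 /\ k1 <> k2.

Definition ellis {G T : Type} (opT : (T -> Prop) -> Prop) (act : G -> T -> T) (xi : T -> T) : Prop :=
  closure (pi_open opT) (fun xi' => exists g, xi' = act g) xi.

Definition rot_equiv {G T K : Type} (opT : (T -> Prop) -> Prop) (opK : (K -> Prop) -> Prop)
  (act : G -> T -> T) (th0 : T) (f : G -> K) (th1 th2 : T) : Prop :=
  forall xi, ellis opT act xi -> forall k,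
    Fgraph opT opK act th0 f (xi th1) k <-> Fgraph opT opK act th0 f (xi th2) k.

Definition semicocycle_setting {G T K : Type}
  (opG : (G -> Prop) -> Prop) (mul : G -> G -> G) (inv : G -> G) (e : G)
  (opT : (T -> Prop) -> Prop) (act : G -> T -> T)
  (opK : (K -> Prop) -> Prop) (th0 : T) (f : G -> K) : Prop :=
  is_topological_group opG mul inv e /\
  is_topology opT /\ compact opT /\ hausdorff opT /\
  is_action mul e act /\
  continuous (prod_open opG opT) opT (fun p => act (fst p) (snd p)) /\
  minimal_action opT act /\ equicontinuous_action opT act /\
  is_topology opK /\ compact opK /\ hausdorff opK /\
  well_defined_on_orbit act th0 f /\ continuous_on_orbit opT opK act th0 f /\
  dense opT (orbit act th0) /\
  (forall th1 th2, rot_equiv opT opK act th0 f th1 th2 -> th1 = th2).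

Definition shift {G K : Type} (mul : G -> G -> G) (h : G) (x : G -> K) : G -> K :=
  fun g => x (mul g h).

Definition Xf {G K : Type} (opK : (K -> Prop) -> Prop) (mul : G -> G -> G) (f : G -> K)
  (x : G -> K) : Prop :=
  closure (pi_open opK) (fun y => exists h, y = shift mul h f) x.

Definition indep_set {G K : Type} (mul : G -> G -> G) (inv : G -> G)
  (A0 A1 : (G -> K) -> Prop) (J : G -> Prop) : Prop :=
  forall (I : list G) (a : G -> bool), (forall i, In i I -> J i) ->
    exists y, forall i, In i I ->
      exists x, (if a i then A1 x else A0 x) /\ y = shift mul (inv i) x.

Definition nbhd_in_Xf {G K : Type} (opK : (K -> Prop) -> Prop) (mul : G -> G -> G) (f : G -> K)
  (N : (G -> K) -> Prop) (x : G -> K) : Prop :=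
  (forall y, N y -> Xf opK mul f y) /\
  exists O, pi_open opK O /\ O x /\ (forall y, O y -> Xf opK mul f y -> N y).

Definition IT_pair {G K : Type} (opK : (K -> Prop) -> Prop) (mul : G -> G -> G) (inv : G -> G)
  (f : G -> K) (x0 x1 : G -> K) : Prop :=
  Xf opK mul f x0 /\ Xf opK mul f x1 /\
  forall N0 N1, nbhd_in_Xf opK mul f N0 x0 -> nbhd_in_Xf opK mul f N1 x1 ->
    exists J, infinite_set J /\ indep_set mul inv N0 N1 J.

Definition tame_Xf {G K : Type} (opK : (K -> Prop) -> Prop) (mul : G -> G -> G) (inv : G -> G)
  (f : G -> K) : Prop :=
  forall x0 x1, IT_pair opK mul inv f x0 x1 -> x0 = x1.

Definition locally_almost_free_at {G T : Type} (opT : (T -> Prop) -> Prop)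
  (act : G -> T -> T) (th : T) : Prop :=
  exists l : list G, forall g, act g th = th ->
    exists g', In g' l /\ act g' th = th /\
      exists U, opT U /\ U th /\ forall y, U y -> act g y = act g' y.

(* Main.v *)
Require Import Defs.
From Stdlib Require Import Reals List.
From Stdlib Require Import Classical ClassicalEpsilon FunctionalExtensionality Lia Lra Arith.
Import ListNotations.
Require Import Defs.

Local Open Scope nat_scope.

Definition inf (A : nat -> Prop) := forall M, exists n, M <= n /\ A n.

Lemma inf_split A R : inf A -> inf (fun n => A n /\ R n) \/ inf (fun n => A n /\ ~ R n).
Proof.
  intro HA. destruct (classic (inf (fun n => A n /\ R n))) as [H|H]; [left; auto|right].
  unfold inf in H. apply not_all_ex_not in H. destruct H as [M0 HM0].
  intro M. destruct (HA (Nat.max M M0)) as [n [Hn An]]. exists n. split; [lia|].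
  split; auto. intro Rn. apply HM0. exists n. split; [lia|auto].
Qed.

Lemma inf_sub A B : inf A -> (forall n, A n -> B n) -> inf B.
Proof. intros HA H M. destruct (HA M) as [n [? ?]]; eauto. Qed.

Lemma pigeon_list {X} (L : list X) : forall (A : nat -> Prop) (R : nat -> X -> Prop), inf A ->
  (forall n, A n -> exists x, In x L /\ R n x) -> exists x, In x L /\ inf (fun n => A n /\ R n x).
Proof.
  induction L as [|x L IH]; intros A R HA H.
  - destruct (HA 0) as [n [_ An]]. destruct (H n An) as [x [[] _]].
  - destruct (inf_split A (fun n => R n x) HA) as [H1|H1].
    + exists x. split; [left; auto|auto].
    + destruct (IH _ R H1) as [y [Hy Hy2]].
      { intros n [An Rn]. destruct (H n An) as [z [[<-|Hz] Rz]]; [contradiction|eauto]. }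
      exists y. split; [right; auto|]. eapply inf_sub; [exact Hy2|]. simpl. tauto.
Qed.

Lemma inc_seq (A : nat -> Prop) : inf A -> exists e : nat -> nat, (forall k, A (e k)) /\ (forall k, e k < e (S k)).
Proof.
  intro HA.
  assert (Hc : forall m, {n | m <= n /\ A n}) by (intro m; apply constructive_indefinite_description; auto).
  exists (fix e k := match k with O => proj1_sig (Hc 0) | S k' => proj1_sig (Hc (S (e k'))) end).
  split.
  - intros [|k]; simpl; exact (proj2 (proj2_sig (Hc _))).
  - intro k. simpl. match goal with |- _ < proj1_sig (Hc ?m) => pose proof (proj1 (proj2_sig (Hc m))) end. lia.
Qed.

Lemma inc_ge (e : nat -> nat) : (forall k, e k < e (S k)) -> forall k, k <= e k.
Proof. intros H k. induction k; [lia|]. specialize (H k). lia. Qed.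

Lemma inc_mono (e : nat -> nat) : (forall k, e k < e (S k)) -> forall k k', k < k' -> e k < e k'.
Proof. intros H k k' Hk. induction Hk; [auto|]. specialize (H m). lia. Qed.

Lemma inc_le_inv (e : nat -> nat) : (forall k, e k < e (S k)) -> forall k k', e k <= e k' -> k <= k'.
Proof. intros H k k' Hle. destruct (Nat.le_gt_cases k k'); auto. pose proof (inc_mono e H k' k). lia. Qed.

Lemma inc_inj (e : nat -> nat) : (forall k, e k < e (S k)) -> forall k k', e k = e k' -> k = k'.
Proof. intros H k k' Heq. pose proof (inc_le_inv e H k k'). pose proof (inc_le_inv e H k' k). lia. Qed.

Lemma diagonal (P : nat -> (nat -> Prop) -> Prop) :
  (forall m (A A' : nat -> Prop), P m A -> (forall n, A' n -> A n) -> P m A') ->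
  (forall m A, inf A -> exists A', (forall n, A' n -> A n) /\ inf A' /\ P m A') ->
  forall A0, inf A0 -> exists S, (forall n, S n -> A0 n) /\ inf S /\
     forall m, exists M, P m (fun n => S n /\ M <= n).
Proof.
  intros Pdown Pstep A0 HA0.
  assert (Hs : forall m (A : {A : nat -> Prop | inf A}),
     {A' : {A : nat -> Prop | inf A} | (forall n, proj1_sig A' n -> proj1_sig A n) /\ P m (proj1_sig A')}).
  { intros m [A HA]. destruct (constructive_indefinite_description _ (Pstep m A HA)) as [A' [H1 [H2 H3]]].
    exists (exist _ A' H2). simpl. auto. }
  set (Aseq := fix Aseq m : {A : nat -> Prop | inf A} := match m with O => exist _ A0 HA0
              | S m' => proj1_sig (Hs m' (Aseq m')) end).
  assert (Hsub : forall m n, proj1_sig (Aseq (S m)) n -> proj1_sig (Aseq m) n).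
  { intros m n. simpl. destruct (Hs m (Aseq m)) as [A' [H1 H2]]. simpl. auto. }
  assert (HP : forall m, P m (proj1_sig (Aseq (S m)))).
  { intros m. simpl. destruct (Hs m (Aseq m)) as [A' [H1 H2]]. simpl. auto. }
  assert (Hsub2 : forall m k n, m <= k -> proj1_sig (Aseq k) n -> proj1_sig (Aseq m) n).
  { intros m k n Hk. induction Hk; auto. }
  assert (Hc : forall m b, {n | b <= n /\ proj1_sig (Aseq (S m)) n}).
  { intros m b. apply constructive_indefinite_description. destruct (Aseq (S m)) as [A HA]. simpl. apply HA. }
  set (a := fix a m := match m with O => proj1_sig (Hc 0 0) | S m' => proj1_sig (Hc (S m') (S (a m'))) end).
  assert (Ha1 : forall m, proj1_sig (Aseq (S m)) (a m)).
  { intros [|m]; simpl; exact (proj2 (proj2_sig (Hc _ _))). }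
  assert (Ha2 : forall m, a m < a (S m)).
  { intro m. change (a (S m)) with (proj1_sig (Hc (S m) (S (a m)))). pose proof (proj1 (proj2_sig (Hc (S m) (S (a m))))). lia. }
  exists (fun n => exists m, n = a m). split; [|split].
  - intros n [m ->]. apply (Hsub2 0 (S m)); [lia|auto].
  - intro M. exists (a M). split; [apply inc_ge; auto|eauto].
  - intro m. exists (a m). apply (Pdown m (proj1_sig (Aseq (S m)))); auto.
    intros n [[k ->] Hk]. apply inc_le_inv in Hk; auto. apply (Hsub2 (S m) (S k)); [lia|auto].
Qed.

Local Open Scope R_scope.

Open Scope R_scope.

Lemma top_true {X} (op : (X -> Prop) -> Prop) : is_topology op -> op (fun _ => True).
Proof. intros [H _]; exact H. Qed.
Lemma top_and {X} (op : (X -> Prop) -> Prop) U V : is_topology op -> op U -> op V -> op (fun x => U x /\ V x).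
Proof. intros [_ [H _]]; auto. Qed.
Lemma top_union {X} (op : (X -> Prop) -> Prop) (F : (X -> Prop) -> Prop) : is_topology op ->
  (forall U, F U -> op U) -> op (fun x => exists U, F U /\ U x).
Proof. intros [_ [_ H]]; auto. Qed.

Lemma Forall_In {X} (F : X -> Prop) l x : Forall F l -> In x l -> F x.
Proof. rewrite Forall_forall. auto. Qed.

Lemma cluster {X} (op : (X -> Prop) -> Prop) : compact op -> forall (A : nat -> Prop) (x : nat -> X),
  inf A -> exists p, forall U, op U -> U p -> forall M, exists n, (M <= n)%nat /\ A n /\ U (x n).
Proof.
  intros Hc A x HA. apply NNPP. intro Hn.
  set (Fam := fun U => op U /\ exists M, forall n, (M <= n)%nat -> A n -> ~ U (x n)).
  destruct (Hc Fam) as [l [Hl Hcov]].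
  - intros U [? _]; auto.
  - intro p. apply NNPP. intro Hp. apply Hn. exists p. intros U HU Up M. apply NNPP. intro HM.
    apply Hp. exists U. split; auto. split; auto. exists M. intros n0 Hn1 Hn2 Hn3. apply HM. eauto.
  - assert (H : exists M, forall U, In U l -> forall n, (M <= n)%nat -> A n -> ~ U (x n)).
    { clear Hcov. induction l as [|U l IH].
      - exists 0%nat. intros ? [].
      - inversion Hl; subst. destruct (IH H2) as [M1 HM1]. destruct H1 as [_ [M2 HM2]].
        exists (Nat.max M1 M2). intros V [<-|HV] n Hnn; [apply HM2; lia|apply HM1; auto; lia]. }
    destruct H as [M HM]. destruct (HA M) as [n [Hn1 Hn2]]. destruct (Hcov (x n)) as [U [HU1 HU2]].
    exact (HM U HU1 n Hn1 Hn2 HU2).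
Qed.

Lemma graph_lemma {T K} (opT : (T -> Prop) -> Prop) (opK : (K -> Prop) -> Prop) (Gr : T * K -> Prop) :
  is_topology opT -> compact opK -> forall (C O : K -> Prop), opK O -> (forall v, O v <-> ~ C v) ->
  forall p, (forall A, opT A -> A p -> exists q w, A q /\ closure (prod_open opT opK) Gr (q, w) /\ C w) ->
  exists v, C v /\ closure (prod_open opT opK) Gr (p, v).
Proof.
  intros HT Hc C O HO HOC p Hyp. apply NNPP. intro Hn.
  set (Fam := fun B => opK B /\ exists A, opT A /\ A p /\ forall q w, A q -> B w ->
         closure (prod_open opT opK) Gr (q, w) -> C w -> False).
  destruct (Hc Fam) as [l [Hl Hcov]].
  - intros U [? _]; auto.
  - intro v. destruct (classic (C v)) as [Cv|nCv].
    + assert (nF : ~ closure (prod_open opT opK) Gr (p, v)) by (intro; apply Hn; eauto).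
      unfold closure in nF. apply not_all_ex_not in nF. destruct nF as [W HW].
      apply imply_to_and in HW. destruct HW as [HW1 HW]. apply imply_to_and in HW. destruct HW as [HW2 HW].
      destruct (HW1 _ HW2) as [A [B [HA [HB [Ap [Bv Hrect]]]]]]. simpl in *.
      exists B. refine (conj (conj HB (ex_intro _ A (conj HA (conj Ap _)))) Bv).
      intros q w Aq Bw Hcl Cw. destruct (Hcl W HW1 (Hrect q w Aq Bw)) as [z [Wz Gz]]. apply HW. eauto.
    + exists O. split; [|apply HOC; auto]. split; auto. exists (fun _ => True).
      split; [apply top_true; auto|]. split; auto. intros q w _ Ow _ Cw. apply HOC in Ow. auto.
  - assert (H : exists A, opT A /\ A p /\ forall B, In B l -> forall q w, A q -> B w ->
         closure (prod_open opT opK) Gr (q, w) -> C w -> False).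
    { clear Hcov. induction l as [|B l IH].
      - exists (fun _ => True). split; [apply top_true; auto|]. split; [auto|intros ? []].
      - inversion Hl; subst. destruct (IH H2) as [A1 [HA1 [A1p HA1']]]. destruct H1 as [_ [A2 [HA2 [A2p HA2']]]].
        exists (fun x => A1 x /\ A2 x). split; [apply top_and; auto|]. split; auto.
        intros B' [<-|HB'] q w [Aq1 Aq2]; [eauto|eauto]. }
    destruct H as [A [HA [Ap HAl]]]. destruct (Hyp A HA Ap) as [q [w [Aq [Fq Cw]]]].
    destruct (Hcov w) as [B [HB Bw]]. eapply HAl; eauto.
Qed.

Lemma regular_pt {K} (opK : (K -> Prop) -> Prop) : is_topology opK -> compact opK -> hausdorff opK ->
  forall (W : K -> Prop) k, opK W -> W k -> exists (V C O : K -> Prop), opK V /\ V k /\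
    (forall z, V z -> C z) /\ (forall z, C z -> W z) /\ opK O /\ (forall z, O z <-> ~ C z).
Proof.
  intros HT Hc Hh W k HW Wk.
  set (Fam := fun Q => opK Q /\ exists P, opK P /\ P k /\ forall z, ~ (P z /\ Q z)).
  destruct (Hc (fun Q => (opK Q /\ forall z, Q z -> W z) \/ Fam Q)) as [l [Hl Hcov]].
  - intros U [[? _]|[? _]]; auto.
  - intro z. destruct (classic (W z)) as [Wz|nWz]; [exists W; split; auto; left; split; auto|].
    assert (k <> z) by (intro; subst; auto).
    destruct (Hh k z H) as [P [Q [HP [HQ [Pk [Qz Hd]]]]]]. exists Q. split; auto. right. split; auto. exists P. auto.
  - assert (H : exists P, opK P /\ P k /\ forall Q, In Q l -> Fam Q -> forall z, ~ (P z /\ Q z)).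
    { clear Hcov. induction l as [|B l IH].
      - exists (fun _ => True). split; [apply top_true; auto|]. split; [auto|intros ? []].
      - inversion Hl; subst. destruct (IH H2) as [P1 [HP1 [P1k HP1']]].
        destruct (classic (Fam B)) as [FB|nFB].
        + destruct FB as [HB [P2 [HP2 [P2k HP2']]]].
          exists (fun x => P1 x /\ P2 x). split; [apply top_and; auto|]. split; auto.
          intros Q [<-|HQ] FQ z [[Pz1 Pz2] Qz]; [eapply HP2'; eauto|eapply HP1'; eauto].
        + exists P1. split; auto. split; auto. intros Q [<-|HQ] FQ; [contradiction|eauto]. }
    destruct H as [P [HP [Pk HPl]]].
    set (O := fun z => exists Q, (In Q l /\ opK Q /\ forall y, ~ (P y /\ Q y)) /\ Q z).
    exists P, (fun z => ~ O z), O. split; auto. split; auto. split; [|split; [|split]].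
    + intros z Pz [Q [[_ [_ HQ]] Qz]]. apply (HQ z). auto.
    + intros z nOz. apply NNPP. intro nWz. destruct (Hcov z) as [Q [HQ Qz]].
      destruct (Forall_In _ _ _ Hl HQ) as [[_ HQW]|FQ]; [auto|].
      apply nOz. exists Q. split; [|auto]. split; [auto|]. split; [apply FQ|]. intro y; apply HPl; auto.
    + apply top_union; auto. intros U [_ [HU _]]; auto.
    + intro z. split; [tauto|apply NNPP].
Qed.

Lemma regular_sep {K} (opK : (K -> Prop) -> Prop) : is_topology opK -> compact opK -> hausdorff opK ->
  forall k0 k1, k0 <> k1 -> exists (V0 V1 C0 C1 O0 O1 : K -> Prop), opK V0 /\ opK V1 /\ V0 k0 /\ V1 k1 /\
   (forall z, V0 z -> C0 z) /\ (forall z, V1 z -> C1 z) /\ opK O0 /\ opK O1 /\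
   (forall z, O0 z <-> ~ C0 z) /\ (forall z, O1 z <-> ~ C1 z) /\ (forall z, ~ (C0 z /\ C1 z)).
Proof.
  intros HT Hc Hh k0 k1 Hne. destruct (Hh k0 k1 Hne) as [W0 [W1 [HW0 [HW1 [W0k [W1k Hd]]]]]].
  destruct (regular_pt opK HT Hc Hh W0 k0 HW0 W0k) as [V0 [C0 [O0 [? [? [? [? [? ?]]]]]]]].
  destruct (regular_pt opK HT Hc Hh W1 k1 HW1 W1k) as [V1 [C1 [O1 [? [? [? [? [? ?]]]]]]]].
  exists V0, V1, C0, C1, O0, O1. repeat (split; auto). intros z [Cz0 Cz1]. apply (Hd z). auto.
Qed.

Open Scope R_scope.

Definition is_metric_for {T} (opT : (T -> Prop) -> Prop) (d : T -> T -> R) : Prop :=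
    (forall x y, d x y = 0 <-> x = y) /\
    (forall x y, d x y = d y x) /\
    (forall x y z, d x z <= d x y + d y z) /\
    (forall U, opT U <-> (forall x, U x -> exists eps, 0 < eps /\
                             (forall y, d x y < eps -> U y))).

Lemma d_nonneg {T} opT (d : T -> T -> R) : is_metric_for opT d -> forall x y, 0 <= d x y.
Proof.
  intros [H0 [Hs [Ht _]]] x y. pose proof (Ht x y x). rewrite (Hs y x) in H. assert (d x x = 0) by (apply H0; auto). lra.
Qed.

Lemma ball_open {T} opT (d : T -> T -> R) : is_metric_for opT d -> forall x r, opT (fun y => d x y < r).
Proof.
  intros Hm x r. pose proof Hm as [H0 [Hs [Ht Ho]]]. apply Ho. intros y Hy. exists (r - d x y). split; [lra|].
  intros z Hz. pose proof (Ht x y z). lra.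
Qed.

Lemma open_ball {T} opT (d : T -> T -> R) : is_metric_for opT d -> forall U x, opT U -> U x ->
  exists eps, 0 < eps /\ forall y, d x y < eps -> U y.
Proof. intros [_ [_ [_ Ho]]] U x HU Ux. apply Ho; auto. Qed.

Lemma open_of_local {T} opT (d : T -> T -> R) : is_metric_for opT d -> forall (S : T -> Prop),
  (forall x, S x -> exists U, opT U /\ U x /\ forall z, U z -> S z) -> opT S.
Proof.
  intros Hm S H. pose proof Hm as [_ [_ [_ Ho]]]. apply Ho. intros x Sx. destruct (H x Sx) as [U [HU [Ux HUS]]].
  destruct (open_ball opT d Hm U x HU Ux) as [eps [He Hb]]. exists eps. split; auto.
Qed.

Definition conv {T} (d : T -> T -> R) (A : nat -> Prop) (x : nat -> T) (p : T) : Prop :=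
  forall eps, 0 < eps -> exists M, forall n, A n -> (M <= n)%nat -> d (x n) p < eps.

Lemma conv_sub {T} (d : T -> T -> R) A A' x p : conv d A x p -> (forall n, A' n -> A n) -> conv d A' x p.
Proof. intros H Hs eps He. destruct (H eps He) as [M HM]. exists M. auto. Qed.

Lemma conv_open {T} opT (d : T -> T -> R) : is_metric_for opT d -> forall A x p U, conv d A x p -> opT U -> U p ->
  exists M, forall n, A n -> (M <= n)%nat -> U (x n).
Proof.
  intros Hm A x p U Hc HU Up. pose proof Hm as [_ [Hs _]].
  destruct (open_ball opT d Hm U p HU Up) as [eps [He Hb]]. destruct (Hc eps He) as [M HM].
  exists M. intros n An Hn. apply Hb. rewrite Hs. auto.
Qed.

Lemma inv_small (eps : R) : 0 < eps -> exists K : nat, forall k, (K <= k)%nat -> / INR (S k) < eps.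
Proof.
  intro He. destruct (archimed_cor1 eps He) as [N [HN HN0]]. exists N. intros k Hk.
  apply Rle_lt_trans with (/ INR N); auto. apply Rinv_le_contravar.
  - apply lt_0_INR. auto.
  - apply le_INR. lia.
Qed.

Lemma subseq_conv {T} opT (d : T -> T -> R) : is_metric_for opT d -> compact opT -> forall A (x : nat -> T), inf A ->
  exists A', (forall n, A' n -> A n) /\ inf A' /\ exists p, conv d A' x p.
Proof.
  intros Hm Hc A x HA. pose proof Hm as [H0 [Hs _]].
  destruct (cluster opT Hc A x HA) as [p Hp].
  assert (Hch : forall (k m : nat), {n | (m <= n)%nat /\ A n /\ d p (x n) < / INR (S k)}).
  { intros k m. apply constructive_indefinite_description.
    destruct (Hp (fun y => d p y < / INR (S k))) with (M := m) as [n [? [? ?]]].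
    - apply ball_open; auto.
    - rewrite (proj2 (H0 p p) eq_refl). apply Rinv_0_lt_compat. apply lt_0_INR. lia.
    - eauto. }
  set (nk := fix nk k := match k with O => proj1_sig (Hch 0%nat 0%nat) | S k' => proj1_sig (Hch (S k') (S (nk k'))) end).
  assert (Hn1 : forall k, A (nk k) /\ d p (x (nk k)) < / INR (S k)).
  { intros [|k]; simpl; exact (proj2 (proj2_sig (Hch _ _))). }
  assert (Hn2 : forall k, (nk k < nk (S k))%nat).
  { intro k. change (nk (S k)) with (proj1_sig (Hch (S k) (S (nk k)))). pose proof (proj1 (proj2_sig (Hch (S k) (S (nk k))))). lia. }
  exists (fun n => exists k, n = nk k). split; [|split].
  - intros n [k ->]. apply Hn1.
  - intro M. exists (nk M). split; [apply inc_ge; auto|eauto].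
  - exists p. intros eps He. destruct (inv_small eps He) as [K HK]. exists (nk K).
    intros n [k ->] Hk. apply inc_le_inv in Hk; auto. rewrite Hs. apply Rlt_trans with (/ INR (S k)); [apply Hn1|apply HK; auto].
Qed.

Lemma dense_list {T} opT (d : T -> T -> R) : is_metric_for opT d -> compact opT -> forall r, 0 < r ->
  exists L, forall th, exists q, In q L /\ d th q < r.
Proof.
  intros Hm Hc r Hr. pose proof Hm as [H0 [Hs _]].
  destruct (Hc (fun U => exists q, forall y, U y <-> d q y < r)) as [l [Hl Hcov]].
  - intros U [q Hq]. pose proof (ball_open opT d Hm q r). pose proof Hm as [_ [_ [_ Ho]]].
    apply Ho. intros x Ux. apply Ho with (x := x) in H; [|apply Hq; auto]. destruct H as [eps [He Hb]].
    exists eps. split; auto. intros y Hy. apply Hq. auto.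
  - intro x. exists (fun y => d x y < r). split; [exists x; intro; tauto|]. cbv beta. rewrite (proj2 (H0 x x) eq_refl). auto.
  - assert (H : exists L, forall U, In U l -> exists q, In q L /\ forall y, U y <-> d q y < r).
    { clear Hcov. induction l as [|U l IH].
      - exists nil. intros ? [].
      - apply Forall_cons_iff in Hl. destruct Hl as [[q Hq] Hl2]. destruct (IH Hl2) as [L HL]. exists (q :: L).
        intros V [<-|HV]; [exists q; split; [left|]; auto|]. destruct (HL V HV) as [q' [? ?]]. exists q'. split; [right|]; auto. }
    destruct H as [L HL]. exists L. intro th. destruct (Hcov th) as [U [HU Uth]]. destruct (HL U HU) as [q [Hq Hq2]].
    exists q. split; auto. rewrite Hs. apply Hq2. auto.
Qed.

Lemma cauchy_conv {T} opT (d : T -> T -> R) : is_metric_for opT d -> compact opT -> forall A (x : nat -> T), inf A ->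
  (forall eps, 0 < eps -> exists M, forall n n', A n -> A n' -> (M <= n)%nat -> (M <= n')%nat -> d (x n) (x n') < eps) ->
  exists p, conv d A x p.
Proof.
  intros Hm Hc A x HA Hcau. pose proof Hm as [H0 [Hs [Ht _]]].
  destruct (cluster opT Hc A x HA) as [p Hp]. exists p. intros eps He.
  destruct (Hcau (eps/2)) as [M HM]; [lra|]. exists M. intros n An Hn.
  destruct (Hp (fun y => d p y < eps/2)) with (M := M) as [n' [Hn' [An' Hd]]].
  - apply ball_open; auto.
  - rewrite (proj2 (H0 p p) eq_refl). lra.
  - pose proof (HM n n' An An' Hn Hn'). pose proof (Ht (x n) (x n') p). rewrite (Hs (x n') p) in H1. lra.
Qed.

Open Scope R_scope.

Lemma act_inv {G T} (mul : G -> G -> G) inv e (act : G -> T -> T) : is_group mul inv e -> is_action mul e act ->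
  forall g x, act (inv g) (act g x) = x.
Proof. intros [_ [_ Hi]] [Ha1 Ha2] g x. rewrite <- Ha2. rewrite (proj1 (Hi g)). auto. Qed.

Lemma act_cont {G T} (opG : (G -> Prop) -> Prop) opT (d : T -> T -> R) (act : G -> T -> T) :
  is_metric_for opT d -> continuous (prod_open opG opT) opT (fun p => act (fst p) (snd p)) ->
  forall g V, opT V -> opT (fun x => V (act g x)).
Proof.
  intros Hm Hjc g V HV. apply (open_of_local opT d Hm). intros x Vx.
  destruct (Hjc V HV (g, x) Vx) as [U1 [U2 [HU1 [HU2 [U1g [U2x Hr]]]]]]. simpl in *.
  exists U2. refine (conj HU2 (conj U2x _)). intros z U2z. apply (Hr g z U1g U2z).
Qed.

Lemma equicont_pt {G T} opT (d : T -> T -> R) (act : G -> T -> T) :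
  is_metric_for opT d -> equicontinuous_action opT act ->
  forall x eps, 0 < eps -> exists del, 0 < del /\ forall y g, d x y < del -> d (act g x) (act g y) < eps.
Proof.
  intros Hm Heq x eps He. pose proof Hm as [H0 [Hs [Ht _]]].
  destruct (Heq (fun p => d (fst p) (snd p) < eps)) as [V [HV [Vd HVg]]].
  - intros [a b] Hab. simpl in Hab. set (r := (eps - d a b) / 2).
    exists (fun y => d a y < r), (fun y => d b y < r). split; [apply ball_open; auto|].
    split; [apply ball_open; auto|]. simpl. rewrite (proj2 (H0 a a) eq_refl), (proj2 (H0 b b) eq_refl).
    split; [unfold r; lra|]. split; [unfold r; lra|]. intros a' b' Ha' Hb'. simpl.
    pose proof (Ht a' a b'). pose proof (Ht a b b'). rewrite (Hs a' a) in H. unfold r in *. lra.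
  - intro z. simpl. rewrite (proj2 (H0 z z) eq_refl). auto.
  - destruct (HV (x, x) (Vd x)) as [U1 [U2 [HU1 [HU2 [U1x [U2x Hr]]]]]]. simpl in *.
    destruct (open_ball opT d Hm U1 x HU1 U1x) as [e1 [He1 Hb1]].
    destruct (open_ball opT d Hm U2 x HU2 U2x) as [e2 [He2 Hb2]].
    exists (Rmin e1 e2). split; [apply Rmin_glb_lt; auto|]. intros y g Hy.
    apply (HVg g x y). apply Hr.
    + apply Hb1. rewrite (proj2 (H0 x x) eq_refl). auto.
    + apply Hb2. pose proof (Rmin_r e1 e2). lra.
Qed.

Lemma conv_tail {T} (d : T -> T -> R) S x p M : conv d (fun n => S n /\ (M <= n)%nat) x p -> conv d S x p.
Proof. intros H eps He. destruct (H eps He) as [M' HM']. exists (Nat.max M M'). intros n Sn Hn. apply HM'; [split|]; auto; lia. Qed.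

Lemma AA {G T} (mul : G -> G -> G) inv e opT (d : T -> T -> R) (act : G -> T -> T) :
  is_group mul inv e -> is_action mul e act ->
  is_metric_for opT d -> compact opT -> equicontinuous_action opT act ->
  forall (c : nat -> G) A0, inf A0 -> exists S0 (xi : T -> T), (forall n, S0 n -> A0 n) /\ inf S0 /\
    (forall th, conv d S0 (fun n => act (c n) th) (xi th)) /\ (forall th1 th2, xi th1 = xi th2 -> th1 = th2).
Proof.
  intros Hg Ha Hm Hc Heq c A0 HA0. pose proof Hm as [H0 [Hs [Ht _]]].
  assert (HL : forall m : nat, exists L, forall th, exists q, In q L /\ d th q < / INR (S m)).
  { intro m. apply (dense_list opT d Hm Hc). apply Rinv_0_lt_compat, lt_0_INR. lia. }
  assert (HL' : forall m : nat, {L | forall th, exists q, In q L /\ d th q < / INR (S m)})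
    by (intro m; apply constructive_indefinite_description; auto).
  set (Lm := fun m => proj1_sig (HL' m)).
  assert (HLm : forall m th, exists q, In q (Lm m) /\ d th q < / INR (S m)) by (intro m; exact (proj2_sig (HL' m))).
  destruct (diagonal (fun m A => forall q, In q (Lm m) -> exists p, conv d A (fun n => act (c n) q) p)) with (A0 := A0)
    as [S0 [HS0 [HS0i HS0P]]]; auto.
  - intros m A A' HA Hsub q Hq. destruct (HA q Hq) as [p Hp]. exists p. eapply conv_sub; eauto.
  - intros m. generalize (Lm m). intros L. induction L as [|q L IH]; intros A HA.
    + exists A. split; auto. split; auto. intros ? [].
    + destruct (IH A HA) as [A1 [H1 [H2 H3]]].
      destruct (subseq_conv opT d Hm Hc A1 (fun n => act (c n) q) H2) as [A2 [H4 [H5 [p Hp]]]].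
      exists A2. split; [auto|]. split; auto. intros q' [<-|Hq']; [eauto|].
      destruct (H3 q' Hq') as [p' Hp']. exists p'. eapply conv_sub; eauto.
  - assert (Hex : forall th, exists p, conv d S0 (fun n => act (c n) th) p).
    { intro th. apply (cauchy_conv opT d Hm Hc); auto. intros eps He.
      destruct (equicont_pt opT d act Hm Heq th (eps/3)) as [del [Hdel Hdel2]]; [lra|].
      destruct (inv_small del Hdel) as [m Hmm]. destruct (HLm m th) as [q [Hq Hdq]].
      destruct (HS0P m) as [M HM]. destruct (HM q Hq) as [p Hp]. apply conv_tail in Hp.
      destruct (Hp (eps/6)) as [M' HM']; [lra|]. exists M'. intros n n' Sn Sn' Hn Hn'.
      assert (d th q < del) by (apply Rlt_trans with (/ INR (S m)); auto).
      pose proof (Hdel2 q (c n) H). pose proof (Hdel2 q (c n') H).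
      pose proof (HM' n Sn Hn). pose proof (HM' n' Sn' Hn').
      pose proof (Ht (act (c n) th) (act (c n) q) (act (c n') th)).
      pose proof (Ht (act (c n) q) p (act (c n') th)).
      pose proof (Ht p (act (c n') q) (act (c n') th)).
      rewrite (Hs p), (Hs (act (c n') q)) in *. lra. }
    set (xi := fun th => proj1_sig (constructive_indefinite_description _ (Hex th))).
    assert (Hxi : forall th, conv d S0 (fun n => act (c n) th) (xi th)) by (intro th; exact (proj2_sig (constructive_indefinite_description _ (Hex th)))).
    exists S0, xi. split; auto. split; auto. split; auto.
    intros th1 th2 Hx. apply H0. apply Rle_antisym; [|apply (d_nonneg opT d Hm)].
    apply Rnot_lt_le. intro Hpos.

    destruct (equicont_pt opT d act Hm Heq (xi th1) (d th1 th2 / 2)) as [del [Hdel Hdel2]]; [lra|].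
    destruct (Hxi th1 del Hdel) as [M1 HM1]. destruct (Hxi th2 del Hdel) as [M2 HM2].
    destruct (HS0i (Nat.max M1 M2)) as [n [Hn Sn]].
    pose proof (HM1 n Sn ltac:(lia)). pose proof (HM2 n Sn ltac:(lia)). simpl in *.
    rewrite Hs in H, H1. rewrite <- Hx in H1.
    pose proof (Hdel2 _ (inv (c n)) H). pose proof (Hdel2 _ (inv (c n)) H1).
    rewrite (act_inv mul inv e act Hg Ha) in H2, H3.
    pose proof (Ht th1 (act (inv (c n)) (xi th1)) th2). rewrite (Hs th1 (act (inv (c n)) (xi th1))) in H4. lra.
Qed.

Open Scope R_scope.

Lemma pi_open_and {I Y} (opY : (Y -> Prop) -> Prop) (O1 O2 : (I -> Y) -> Prop) :
  pi_open opY O1 -> pi_open opY O2 -> pi_open opY (fun x => O1 x /\ O2 x).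
Proof.
  intros H1 H2 x [x1 x2]. destruct (H1 x x1) as [l1 [Hl1 Hl1']]. destruct (H2 x x2) as [l2 [Hl2 Hl2']].
  exists (l1 ++ l2). split; [apply Forall_app; auto|]. intros y Hy. apply Forall_app in Hy. destruct Hy. auto.
Qed.

Lemma pi_open_true {I Y} (opY : (Y -> Prop) -> Prop) : pi_open opY (fun _ : I -> Y => True).
Proof. intros x _. exists nil. split; auto. Qed.

Lemma pi_cyl {I Y} (opY : (Y -> Prop) -> Prop) (c : I) V : opY V -> pi_open opY (fun z : I -> Y => V (z c)).
Proof.
  intros HV x Vx. exists [(c, V)]. split; [constructor; auto|]. intros y Hy. inversion Hy; auto.
Qed.

Lemma pi_shift {G Y} (opY : (Y -> Prop) -> Prop) (mul : G -> G -> G) a O :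
  pi_open opY O -> pi_open opY (fun z => O (shift mul a z)).
Proof.
  intros HO z Oz. destruct (HO _ Oz) as [l [Hl Hl']].
  exists (map (fun p => (mul (fst p) a, snd p)) l). split.
  - apply Forall_map. eapply Forall_impl; [|exact Hl]. intros [g V]. simpl. auto.
  - intros y Hy. apply Hl'. apply Forall_map in Hy. eapply Forall_impl; [|exact Hy]. intros [g V]. simpl. auto.
Qed.

Lemma Xf_shift {G K} (opK : (K -> Prop) -> Prop) (mul : G -> G -> G) inv e (f : G -> K) :
  is_group mul inv e -> forall a y, Xf opK mul f y -> Xf opK mul f (shift mul a y).
Proof.
  intros [Hassoc _] a y Hy O HO Oy. destruct (Hy (fun z => O (shift mul a z)) (pi_shift opK mul a O HO) Oy) as [z [Oz [h ->]]].
  exists (shift mul a (shift mul h f)). split; auto. exists (mul a h).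
  unfold shift. apply functional_extensionality. intro g. rewrite Hassoc. auto.
Qed.

Definition omega_pt {G T K} opT opK (mul : G -> G -> G) (act : G -> T -> T) th0 (f : G -> K) (y : G -> K) (th : T) :=
  (forall c, Fgraph opT opK act th0 f (act c th) (y c)) /\
  (forall c c' U, opT U -> U th -> (forall x, U x -> act c x = act c' x) -> y c = y c').

Lemma omega {G T K} (opG : (G -> Prop) -> Prop) opT opK (d : T -> T -> R) (mul : G -> G -> G) e (act : G -> T -> T) th0 (f : G -> K) :
  is_topology opT -> compact opT -> is_metric_for opT d ->
  continuous (prod_open opG opT) opT (fun p => act (fst p) (snd p)) ->
  is_action mul e act -> well_defined_on_orbit act th0 f -> hausdorff opK ->
  forall y, Xf opK mul f y -> exists th, omega_pt opT opK mul act th0 f y th.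
Proof.
  intros HT Hc Hm Hjc Ha Hwd Hh y Hy.
  assert (H1 : exists th, forall U, opT U -> U th -> forall O, pi_open opK O -> O y ->
                 exists h, O (shift mul h f) /\ U (act h th0)).
  { apply NNPP. intro Hn.
    set (Fam := fun U => opT U /\ exists O, pi_open opK O /\ O y /\ forall h, O (shift mul h f) -> ~ U (act h th0)).
    destruct (Hc Fam) as [l [Hl Hcov]].
    - intros U [? _]; auto.
    - intro th. apply NNPP. intro Hth. apply Hn. exists th. intros U HU Uth O HO Oy. apply NNPP. intro Hno.
      apply Hth. exists U. split; auto. split; auto. exists O. split; auto. split; auto.
      intros h Oh Uh. apply Hno. eauto.
    - assert (H : exists O, pi_open opK O /\ O y /\ forall U, In U l -> forall h, O (shift mul h f) -> ~ U (act h th0)).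
      { clear Hcov. induction l as [|U l IH].
        - exists (fun _ => True). split; [apply pi_open_true|]. split; [auto|intros ? []].
        - apply Forall_cons_iff in Hl. destruct Hl as [[_ [O1 [HO1 [O1y HO1']]]] Hl2].
          destruct (IH Hl2) as [O2 [HO2 [O2y HO2']]].
          exists (fun x => O1 x /\ O2 x). split; [apply pi_open_and; auto|]. split; [auto|].
          intros V [<-|HV] h [Oh1 Oh2]; eauto. }
      destruct H as [O [HO [Oy HOl]]]. destruct (Hy O HO Oy) as [z [Oz [h ->]]].
      destruct (Hcov (act h th0)) as [U [HU Uh]]. exact (HOl U HU h Oz Uh). }
  destruct H1 as [th Hth]. exists th. split.
  - intros c W HW Wp. destruct (HW _ Wp) as [A [B [HA [HB [Ap [Bv Hr]]]]]]. simpl in *.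
    destruct (Hth (fun x => A (act c x)) (act_cont opG opT d act Hm Hjc c A HA) Ap (fun z => B (z c)) (pi_cyl opK c B HB) Bv)
      as [h [Bh Ah]].
    exists (act (mul c h) th0, f (mul c h)). split; [|eauto]. apply Hr; auto.
    rewrite (proj2 Ha). auto.
  - intros c c' U HU Uth Hagree. apply NNPP. intro Hne.
    destruct (Hh _ _ Hne) as [B [B' [HB [HB' [Bc [Bc' Hdis]]]]]].
    destruct (Hth U HU Uth (fun z => B (z c) /\ B' (z c'))) as [h [[Bh Bh'] Uh]].
    + apply pi_open_and; apply pi_cyl; auto.
    + auto.
    + unfold shift in Bh, Bh'. rewrite (Hwd (mul c h) (mul c' h)) in Bh.
      * apply (Hdis (f (mul c' h))). auto.
      * rewrite !(proj2 Ha). auto.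
Qed.

Open Scope R_scope.

Definition Qgen {G T} (opT : (T -> Prop) -> Prop) (act : G -> T -> T) (D : T -> Prop) (c : nat -> G)
  (Mb : bool -> nat -> Prop) (th : T) (A : nat -> Prop) : Prop :=
  ((forall n, A n -> ~ D (act (c n) th)) /\ forall b, (forall n, A n -> Mb b n) \/ (forall n, A n -> ~ Mb b n))
  \/ (forall n n', A n -> A n' -> exists U, opT U /\ U th /\ forall x, U x -> act (c n) x = act (c n') x).

Lemma Qgen_down {G T} opT (act : G -> T -> T) D c Mb th (A A' : nat -> Prop) :
  Qgen opT act D c Mb th A -> (forall n, A' n -> A n) -> Qgen opT act D c Mb th A'.
Proof.
  intros [[H1 H2]|H] Hs; [left|right].
  - split; [eauto|]. intro b. destruct (H2 b); [left|right]; eauto.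
  - intros n n' ? ?. apply H; auto.
Qed.

Lemma group_decomp {G} (mul : G -> G -> G) inv e : is_group mul inv e -> forall a b, a = mul (mul a (inv b)) b.
Proof. intros [Has [Hid Hi]] a b. rewrite <- Has. rewrite (proj1 (Hi b)). rewrite (proj2 (Hid a)). auto. Qed.

Lemma refine_theta {G T} (opG : (G -> Prop) -> Prop) (mul : G -> G -> G) inv e opT (d : T -> T -> R) (act : G -> T -> T)
  (D : T -> Prop) (c : nat -> G) (Mb : bool -> nat -> Prop) th :
  is_group mul inv e -> is_action mul e act -> is_topology opT -> is_metric_for opT d ->
  continuous (prod_open opG opT) opT (fun p => act (fst p) (snd p)) ->
  finite_set (fun y => orbit act th y /\ D y) ->
  (forall p, D p -> locally_almost_free_at opT act p) ->
  forall A, inf A -> exists A', (forall n, A' n -> A n) /\ inf A' /\ Qgen opT act D c Mb th A'.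
Proof.
  intros Hg Ha HT Hm Hjc Hfin Hlaf A HA.
  destruct (inf_split A (fun n => D (act (c n) th)) HA) as [HD|HnD].
  - destruct Hfin as [L HL].
    destruct (pigeon_list L _ (fun n p => act (c n) th = p) HD) as [p [Hp HA2]].
    { intros n [An Dn]. exists (act (c n) th). split; auto. apply HL. split; auto. exists (c n). auto. }
    destruct (HA2 0%nat) as [m0 [_ [[Am0 Dm0] Hm0]]].
    assert (Dp : D p) by (rewrite <- Hm0; auto).
    destruct (Hlaf p Dp) as [l Hl].
    destruct (pigeon_list l _ (fun n g' => act g' p = p /\ exists U, opT U /\ U p /\
        forall y, U y -> act (mul (c n) (inv (c m0))) y = act g' y) HA2) as [g' [Hg' HA3]].
    { intros n [[An Dn] Hn]. apply Hl. rewrite (proj2 Ha). rewrite <- Hm0.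
      rewrite (act_inv mul inv e act Hg Ha). congruence. }
    exists (fun n => (A n /\ D (act (c n) th)) /\ act (c n) th = p /\ act g' p = p /\ exists U, opT U /\ U p /\
        forall y, U y -> act (mul (c n) (inv (c m0))) y = act g' y).
    split; [intros n [[? _] _]; auto|]. split; [eapply inf_sub; [exact HA3|]; simpl; tauto|].
    right. intros n n' [_ [_ [_ [U1 [HU1 [U1p HU1']]]]]] [_ [_ [_ [U2 [HU2 [U2p HU2']]]]]].
    exists (fun x => (fun z => U1 z /\ U2 z) (act (c m0) x)). split.
    + apply (act_cont opG opT d act Hm Hjc (c m0) (fun z => U1 z /\ U2 z)). apply top_and; auto.
    + split; [simpl; rewrite Hm0; auto|]. intros x [Ux1 Ux2].
      rewrite (group_decomp mul inv e Hg (c n) (c m0)), (group_decomp mul inv e Hg (c n') (c m0)).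
      rewrite (proj2 Ha (mul (c n) (inv (c m0))) (c m0) x), (proj2 Ha (mul (c n') (inv (c m0))) (c m0) x). rewrite HU1', HU2'; auto.
  - destruct (inf_split _ (Mb false) HnD) as [H2|H2];
    (destruct (inf_split _ (Mb true) H2) as [H3|H3];
     (eexists; split; [|split; [exact H3|]]; [simpl; tauto|left; split; [simpl; tauto|]];
      intros [|]; first [left; simpl; tauto | right; simpl; tauto])).
Qed.

Lemma even_S k : Nat.even (S k) = negb (Nat.even k).
Proof. rewrite Nat.even_succ, Nat.negb_even. auto. Qed.

Lemma parity_exists (b : bool) (M : nat) : exists k, (M <= k)%nat /\ Nat.even k = b.
Proof.
  destruct (Bool.bool_dec (Nat.even M) b) as [H|H]; [exists M; split; auto|].
  exists (S M). split; [lia|]. rewrite even_S. destruct b, (Nat.even M); simpl in *; congruence.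
Qed.

Lemma inj_seq {X} (J : X -> Prop) : infinite_set J -> exists j : nat -> X, (forall n, J (j n)) /\ (forall n m, j n = j m -> n = m).
Proof.
  intro HJ.
  assert (Hc : forall l : list X, {x | J x /\ ~ In x l}).
  { intro l. apply constructive_indefinite_description. apply NNPP. intro Hn. apply HJ. exists l.
    intros x Jx. apply NNPP. intro nI. apply Hn. eauto. }
  set (Lst := fix Lst n := match n with O => nil | S n' => proj1_sig (Hc (Lst n')) :: Lst n' end).
  exists (fun n => proj1_sig (Hc (Lst n))). split.
  - intro n. exact (proj1 (proj2_sig (Hc (Lst n)))).
  - assert (Hin : forall m n, (m < n)%nat -> In (proj1_sig (Hc (Lst m))) (Lst n)).
    { intros m n Hmn. induction Hmn; simpl; [left; auto|right; auto]. }
    intros n m Heq. destruct (Nat.lt_total n m) as [H|[H|H]]; auto.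
    + exfalso. apply (proj2 (proj2_sig (Hc (Lst m)))). rewrite <- Heq. apply Hin; auto.
    + exfalso. apply (proj2 (proj2_sig (Hc (Lst n)))). rewrite Heq. apply Hin; auto.
Qed.

Theorem mainTheorem10 (G T K : Type)
  (opG : (G -> Prop) -> Prop) (mul : G -> G -> G) (inv : G -> G) (e : G)
  (opT : (T -> Prop) -> Prop) (act : G -> T -> T)
  (opK : (K -> Prop) -> Prop) (th0 : T) (f : G -> K)
  (Hset : semicocycle_setting opG mul inv e opT act opK th0 f)
  (Hmet : metrizable opT)
  (Hcount : countable_set (Dset opT opK act th0 f))
  (Hfin : forall th, finite_set (fun y => orbit act th y /\ Dset opT opK act th0 f y))
  (Hlaf : forall th, Dset opT opK act th0 f th -> locally_almost_free_at opT act th) :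
  tame_Xf opK mul inv f.
Proof.
  destruct Hset as [[HTopG [Hgrp [Hmulc Hinvc]]] [HT [HcT [HhT [Hact [Hjc [Hmin [Heq [HK [HcK [HhK [Hwd [Hcont [Hdense Hrot]]]]]]]]]]]]]].
  destruct Hmet as [d Hm]. change (is_metric_for opT d) in Hm.
  destruct Hcount as [hc Hhc].
  set (Dp := Dset opT opK act th0 f). set (Fg := Fgraph opT opK act th0 f).
  intros x0 x1 [Hx0 [Hx1 HIT]]. apply NNPP. intro Hne.
  assert (Hg0 : exists g0, x0 g0 <> x1 g0).
  { apply NNPP. intro Hn. apply Hne. apply functional_extensionality. intro g. apply NNPP. intro. apply Hn. eauto. }
  destruct Hg0 as [g0 Hg0].
  destruct (regular_sep opK HK HcK HhK _ _ Hg0) as [V0 [V1 [C0 [C1 [O0 [O1 [HV0 [HV1 [V0x [V1x [HVC0 [HVC1 [HO0 [HO1 [HOC0 [HOC1 Hdis]]]]]]]]]]]]]]]].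
  set (Vb := fun b : bool => if b then V1 else V0).
  set (Cb := fun b : bool => if b then C1 else C0).
  set (Ob := fun b : bool => if b then O1 else O0).
  assert (HVCb : forall b z, Vb b z -> Cb b z) by (intros [|] z; simpl; auto).
  assert (HOCb : forall b z, Ob b z <-> ~ Cb b z) by (intros [|] z; simpl; auto).
  assert (HObop : forall b, opK (Ob b)) by (intros [|]; simpl; auto).
  assert (Hdisb : forall b z, Cb b z -> Cb (negb b) z -> False) by (intros [|] z ? ?; apply (Hdis z); simpl in *; auto).
  set (N0 := fun x => Xf opK mul f x /\ V0 (x g0)).
  set (N1 := fun x => Xf opK mul f x /\ V1 (x g0)).
  destruct (HIT N0 N1) as [J [HJinf HJind]].
  { split; [intros y [? ?]; auto|]. exists (fun z => V0 (z g0)). split; [apply pi_cyl; auto|]. split; auto. intros y ? ?. split; auto. }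
  { split; [intros y [? ?]; auto|]. exists (fun z => V1 (z g0)). split; [apply pi_cyl; auto|]. split; auto. intros y ? ?. split; auto. }
  destruct (inj_seq J HJinf) as [j [HjJ Hjinj]].
  set (c := fun n => mul g0 (j n)).
  set (Mb := fun th (b : bool) n => exists v, Fg (act (c n) th) v /\ Cb b v).
  (* Arzela-Ascoli *)
  destruct (AA mul inv e opT d act Hgrp Hact Hm HcT Heq c (fun _ => True)) as [S0 [xi [_ [HS0i [Hxi Hxiinj]]]]].
  { intro M. exists M. auto. }
  destruct (diagonal (fun m A => forall th, Dp (xi th) -> hc (xi th) = m -> Qgen opT act Dp c (Mb th) th A)) with (A0 := S0)
    as [Sset [HSS0 [HSi HSP]]]; auto.
  { intros m A A' HA Hs th ? ?. eapply Qgen_down; eauto. }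
  { intros m A HA. destruct (classic (exists th, Dp (xi th) /\ hc (xi th) = m)) as [[th [Dth Hth]]|Hno].
    - destruct (refine_theta opG mul inv e opT d act Dp c (Mb th) th Hgrp Hact HT Hm Hjc (Hfin th) Hlaf A HA)
        as [A' [H1 [H2 H3]]].
      exists A'. split; auto. split; auto. intros th' Dth' Hth'.
      assert (th' = th) as ->; auto. apply Hxiinj. apply Hhc; auto. congruence.
    - exists A. split; auto. split; auto. intros th Dth Hth. exfalso. eauto. }
  destruct (inc_seq Sset HSi) as [ek [HekS Hekinc]].
  set (a := fun i : G => match excluded_middle_informative (exists k, j (ek k) = i) with
              | left H => Nat.even (proj1_sig (constructive_indefinite_description _ H))
              | right _ => false end).
  assert (Ha : forall k, a (j (ek k)) = Nat.even k).
  { intro k. unfold a. destruct (excluded_middle_informative _) as [H|H]; [|exfalso; eauto].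
    destruct (constructive_indefinite_description _ H) as [k' Hk']. simpl.
    apply Hjinj in Hk'. apply (inc_inj ek Hekinc) in Hk'. subst; auto. }
  pose proof Hgrp as [Hassoc [Hid Hinv]].
  assert (Hclaim : forall N, exists (yth : prod (G -> K) T), omega_pt opT opK mul act th0 f (fst yth) (snd yth) /\
            forall k, (k <= N)%nat -> Vb (Nat.even k) (fst yth (c (ek k)))).
  { intro N. destruct (HJind (map (fun k => j (ek k)) (seq 0 (S N))) a) as [y Hy].
    { intros i Hi. apply in_map_iff in Hi. destruct Hi as [k [<- _]]. auto. }
    assert (Hyk : forall k, (k <= N)%nat -> Xf opK mul f y /\ Vb (Nat.even k) (y (c (ek k)))).
    { intros k Hk. destruct (Hy (j (ek k))) as [x [Hx ->]].
      { apply in_map_iff. exists k. split; auto. apply in_seq. lia. }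
      rewrite Ha in Hx. split.
      - apply (Xf_shift opK mul inv e f Hgrp). destruct (Nat.even k); apply Hx.
      - unfold c, shift. rewrite <- Hassoc, (proj2 (Hinv _)), (proj2 (Hid _)).
        destruct (Nat.even k); apply Hx. }
    destruct (omega opG opT opK d mul e act th0 f HT HcT Hm Hjc Hact Hwd HhK y) as [th Hth].
    { apply (Hyk 0%nat). lia. }
    exists (y, th). simpl. split; auto. intros k Hk. apply Hyk; auto. }
  set (yth := fun N => proj1_sig (constructive_indefinite_description _ (Hclaim N))).
  assert (Hyth : forall N, omega_pt opT opK mul act th0 f (fst (yth N)) (snd (yth N)) /\
            forall k, (k <= N)%nat -> Vb (Nat.even k) (fst (yth N) (c (ek k)))).
  { intro N. exact (proj2_sig (constructive_indefinite_description _ (Hclaim N))). }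
  destruct (cluster opT HcT (fun _ => True) (fun N => snd (yth N))) as [ths Hths].
  { intro M. exists M. auto. }
  assert (Hmeets : forall k, Mb ths (Nat.even k) (ek k)).
  { intro k. destruct (graph_lemma opT opK (fun p => exists g, p = (act g th0, f g)) HT HcK
       (Cb (Nat.even k)) (Ob (Nat.even k)) (HObop _) (HOCb _) (act (c (ek k)) ths)) as [v [Cv Fv]].
    - intros A HA Ap. destruct (Hths (fun x => A (act (c (ek k)) x)) (act_cont opG opT d act Hm Hjc _ A HA) Ap k)
        as [N [HN [_ HAN]]].
      exists (act (c (ek k)) (snd (yth N))), (fst (yth N) (c (ek k))). split; auto. split.
      + apply (proj1 (proj1 (Hyth N))).
      + apply HVCb. apply (proj2 (Hyth N)); auto.
    - exists v. split; auto. }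
  assert (HtwoD : forall p v0 v1, Fg p v0 -> Cb false v0 -> Fg p v1 -> Cb true v1 -> Dp p).
  { intros p v0 v1 F0 C0v F1 C1v. exists v0, v1. split; auto. split; auto. intro Heqv. subst.
    apply (Hdis v1). simpl in *. auto. }
  destruct (classic (Dp (xi ths))) as [Dx|nDx].
  - destruct (HSP (hc (xi ths))) as [M HM]. specialize (HM ths Dx eq_refl).
    assert (HkM : (M <= ek M)%nat) by (apply inc_ge; auto).
    assert (HkM1 : (M <= ek (S M))%nat) by (pose proof (inc_ge ek Hekinc (S M)); lia).
    destruct HM as [[HnD Hconst]|Hagree].
    + pose proof (Hmeets M) as HmM. pose proof (Hmeets (S M)) as HmM1. rewrite even_S in HmM1.
      destruct (Hconst (Nat.even M)) as [Hc1|Hc1].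
      * pose proof (Hc1 (ek (S M)) (conj (HekS _) HkM1)) as Hb.
        apply (HnD (ek (S M)) (conj (HekS _) HkM1)).
        destruct Hb as [v0 [F0 Cv0]]. destruct HmM1 as [v1 [F1 Cv1]].
        destruct (Nat.even M); simpl in *; [apply (HtwoD _ v1 v0)|apply (HtwoD _ v0 v1)]; auto.
      * exact (Hc1 (ek M) (conj (HekS _) HkM) HmM).
    + destruct (Hagree (ek M) (ek (S M)) (conj (HekS _) HkM) (conj (HekS _) HkM1)) as [U [HU [Uth HUa]]].
      destruct (Hths U HU Uth (S M)) as [N [HN [_ UN]]].
      pose proof (proj2 (proj1 (Hyth N)) _ _ U HU UN HUa) as Hyeq.
      pose proof (proj2 (Hyth N) M ltac:(lia)) as HV0'. pose proof (proj2 (Hyth N) (S M) HN) as HV1'.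
      rewrite even_S in HV1'. rewrite <- Hyeq in HV1'.
      apply HVCb in HV0'. apply HVCb in HV1'. exact (Hdisb _ _ HV0' HV1').
  - assert (Hb : exists b, ~ exists v, Fg (xi ths) v /\ Cb b v).
    { apply NNPP. intro Hn. apply nDx.
      assert (H0 : exists v, Fg (xi ths) v /\ Cb false v) by (apply NNPP; intro; apply Hn; eauto).
      assert (H1 : exists v, Fg (xi ths) v /\ Cb true v) by (apply NNPP; intro; apply Hn; eauto).
      destruct H0 as [v0 [? ?]]. destruct H1 as [v1 [? ?]]. apply (HtwoD _ v0 v1); auto. }
    destruct Hb as [b Hb].
    destruct (graph_lemma opT opK (fun p => exists g, p = (act g th0, f g)) HT HcK (Cb b) (Ob b) (HObop b) (HOCb b) (xi ths))
      as [vv [Cvv Fvv]]; [|apply Hb; exists vv; split; auto].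
    intros A HA Ap. destruct (conv_open opT d Hm S0 (fun n => act (c n) ths) (xi ths) A (Hxi ths) HA Ap) as [M HM].
    destruct (parity_exists b M) as [k [Hk Hkb]].
    destruct (Hmeets k) as [v [Fv Cv]]. exists (act (c (ek k)) ths), v. split.
    + apply HM; [apply HSS0; auto|]. pose proof (inc_ge ek Hekinc k). lia.
    + rewrite Hkb in Cv. split; auto.
Qed.
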